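(* Let $\mathbf K$ be the complete linearly ordered set obtained from $\mathbb N=\{0,1,2,\dots\}$ (usual order) by adding a top element $\omega$, regarded as a complete lattice, and let $\mathbf L=\mathbf K\times\{0,1\}$ be the product lattice (componentwise order, with $\{0,1\}$ ordered by $0<1$). Then in the complete lattice $\mathbf L$: the element $(\omega,0)$ is a relative generator, but $(\omega,0)$ belongs to every maximal proper complete sublattice of $\mathbf L$. Moreover, the set $\Gamma$ of all non-generators of $\mathbf L$ is a complete sublattice of $\mathbf L$.
   Context: A complete lattice is a partially ordered set in which every subset (including the empty set) has a meet and a join. A complete sublattice of a complete lattice $\mathbf L$ is a subset $T\subseteq L$ closed under arbitrary meets and joins computed in $L$, including those of the empty set (so $T$ contains the minimum and the maximum of $L$). For $X\subseteq L$, $\langle X\rangle$ is the intersection of all complete sublattices containing $X$, and $\langle X,a\rangle=\langle X\cup\{a\}\rangle$. An element $a$ is a non-generator if for every $X\subseteq L$, $\langle X,a\rangle=L$ implies $\langle X\rangle=L$; otherwise $a$ is a relative generator. A maximal proper complete sublattice is a complete sublattice $T\ne L$ that is not properly contained in any complete sublattice other than $L$. *)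

(* Defs.v *)
From Stdlib Require Import Arith.

Section Generic.
Variable (A : Type) (le : A -> A -> Prop).

Definition is_ub (S : A -> Prop) (x : A) : Prop := forall y, S y -> le y x.
Definition is_lb (S : A -> Prop) (x : A) : Prop := forall y, S y -> le x y.
Definition is_join (S : A -> Prop) (x : A) : Prop :=
  is_ub S x /\ forall z, is_ub S z -> le x z.
Definition is_meet (S : A -> Prop) (x : A) : Prop :=
  is_lb S x /\ forall z, is_lb S z -> le z x.

(** Complete sublattice: closed under arbitrary joins and meets (including
    those of the empty set) computed in the ambient lattice. *)
Definition complete_sublattice (T : A -> Prop) : Prop :=
  forall S : A -> Prop, (forall y, S y -> T y) ->
    (forall x, is_join S x -> T x) /\ (forall x, is_meet S x -> T x).

Definition generated (X : A -> Prop) : A -> Prop :=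
  fun a => forall T, complete_sublattice T -> (forall x, X x -> T x) -> T a.

Definition full (T : A -> Prop) : Prop := forall a, T a.

Definition add_elem (X : A -> Prop) (a : A) : A -> Prop :=
  fun x => X x \/ x = a.

Definition non_generator (a : A) : Prop :=
  forall X : A -> Prop, full (generated (add_elem X a)) -> full (generated X).

Definition relative_generator (a : A) : Prop := ~ non_generator a.

Definition maximal_proper_complete_sublattice (T : A -> Prop) : Prop :=
  complete_sublattice T /\ ~ full T /\
  forall T' : A -> Prop, complete_sublattice T' -> (forall x, T x -> T' x) ->
    (forall x, T' x <-> T x) \/ full T'.

End Generic.

Inductive Kel : Type := Fin (n : nat) | Omega.

Definition Kle (x y : Kel) : Prop :=
  match x, y with
  | _, Omega => True
  | Omega, Fin _ => False
  | Fin m, Fin n => m <= n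
  end.

(** {0,1} as bool with false < true *)
Definition Ble (x y : bool) : Prop := x = false \/ y = true.

Definition L : Type := (Kel * bool)%type.

Definition Lle (x y : L) : Prop := Kle (fst x) (fst y) /\ Ble (snd x) (snd y).

(* Main.v *)
Require Import Defs.
From Stdlib Require Import Classical Lia Arith.

Ltac lsolve := unfold Lle, Kle, Ble in *; simpl in *;
  intuition (try lia; try discriminate; try congruence).

Lemma Lle_trans (x y z : L) : Lle x y -> Lle y z -> Lle x z.
Proof. destruct x as [[a|] b], y as [[c|] d], z as [[e|] f]; lsolve. Qed.

Definition S2 (p q : L) : L -> Prop := fun x => Lle x p \/ Lle q x.

Lemma S2_csl p q : complete_sublattice L Lle (S2 p q).
Proof.
  intros A HA; split; intros x [Hub Hl].
  - destruct (classic (exists y, A y /\ Lle q y)) as [[y [Ay Hy]]|Hn].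
    + right. eapply Lle_trans; [exact Hy| apply Hub; auto].
    + left. apply Hl. intros y Ay. destruct (HA y Ay) as [H|H]; auto.
      exfalso; apply Hn; eauto.
  - destruct (classic (exists y, A y /\ Lle y p)) as [[y [Ay Hy]]|Hn].
    + left. apply Lle_trans with y; [apply Hub; auto| exact Hy].
    + right. apply Hl. intros y Ay. destruct (HA y Ay) as [H|H]; auto.
      exfalso; apply Hn; eauto.
Qed.

Lemma csl_join2 T u v x : complete_sublattice L Lle T -> T u -> T v ->
  is_join L Lle (fun y => y = u \/ y = v) x -> T x.
Proof.
  intros H Hu Hv Hj.
  assert (Hs : forall y, (fun y => y = u \/ y = v) y -> T y) by (intros y [-> | ->]; auto).
  apply (proj1 (H _ Hs)); auto.
Qed.

Lemma csl_meet2 T u v x : complete_sublattice L Lle T -> T u -> T v ->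
  is_meet L Lle (fun y => y = u \/ y = v) x -> T x.
Proof.
  intros H Hu Hv Hj.
  assert (Hs : forall y, (fun y => y = u \/ y = v) y -> T y) by (intros y [-> | ->]; auto).
  apply (proj2 (H _ Hs)); auto.
Qed.

Lemma relgen (a p q : L) : ~ S2 p q a ->
  (forall T, complete_sublattice L Lle T -> (forall x, S2 p q x -> T x) -> T a ->
     forall z, T z) -> relative_generator L Lle a.
Proof.
  intros Hna Hgen Hng.
  assert (Hf : full L (generated L Lle (S2 p q))).
  { apply Hng. intros z T cslT HT. apply Hgen; auto.
    - intros x Hx; apply HT; left; auto.
    - apply HT; right; auto. }
  apply Hna. apply (Hf a (S2 p q) (S2_csl p q)); auto.
Qed.

Lemma join_empty : is_join L Lle (fun _ => False) (Fin 0, false).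
Proof. split. intros y []. intros [[m|] c] _; lsolve. Qed.

Lemma meet_empty : is_meet L Lle (fun _ => False) (Omega, true).
Proof. split. intros y []. intros [[m|] c] _; lsolve. Qed.

Lemma csl_bot T : complete_sublattice L Lle T -> T (Fin 0, false).
Proof. intros H. apply (proj1 (H (fun _ => False) (fun _ h => match h with end))).
  apply join_empty. Qed.

Lemma csl_top T : complete_sublattice L Lle T -> T (Omega, true).
Proof. intros H. apply (proj2 (H (fun _ => False) (fun _ h => match h with end))).
  apply meet_empty. Qed.

Lemma relgen_omega0 : relative_generator L Lle (Omega, false).
Proof.
  apply (relgen _ (Fin 0, false) (Fin 0, true)).
  - unfold S2; lsolve.
  - intros T cslT HS Ha [[m|] [|]].
    + apply HS; right; lsolve.
    + destruct m as [|m]. apply HS; left; lsolve.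
      apply (csl_meet2 T (Omega, false) (Fin (S m), true)); auto.
      apply HS; right; lsolve.
      split. intros y [-> | ->]; lsolve.
      intros [[k|] c] Hz. pose proof (Hz _ (or_introl eq_refl)).
      pose proof (Hz _ (or_intror eq_refl)). lsolve. 
      pose proof (Hz _ (or_introl eq_refl)).
      pose proof (Hz _ (or_intror eq_refl)). lsolve.
    + apply HS; right; lsolve.
    + exact Ha.
Qed.

Lemma nongen_bot : non_generator L Lle (Fin 0, false).
Proof.
  intros X H z T cslT HX. apply (H z T cslT). intros x [Hx| ->]; auto.
  apply csl_bot; auto.
Qed.

Lemma nongen_top : non_generator L Lle (Omega, true).
Proof.
  intros X H z T cslT HX. apply (H z T cslT). intros x [Hx| ->]; auto.
  apply csl_top; auto.
Qed.

Lemma nongen_cases x : non_generator L Lle x -> x = (Fin 0, false) \/ x = (Omega, true).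
Proof.
  intros H. destruct x as [[n|] [|]].
  - exfalso. destruct n as [|n].
    + revert H. apply (relgen _ (Omega, false) (Fin 1, true)).
      * unfold S2; lsolve.
      * intros T cslT HS Ha [[m|] [|]].
        -- destruct m. exact Ha. apply HS; right; lsolve.
        -- apply HS; left; lsolve.
        -- apply HS; right; lsolve.
        -- apply HS; left; lsolve.
    + revert H. apply (relgen _ (Fin n, true) (Fin (S (S n)), false)).
      * unfold S2; lsolve.
      * intros T cslT HS Ha [[m|] [|]].
        -- destruct (Nat.eq_dec m (S n)) as [->|Hne]. exact Ha.
           apply HS. unfold S2. lsolve.
        -- destruct (Nat.eq_dec m (S n)) as [->|Hne].
           apply (csl_meet2 T (Fin (S n), true) (Fin (S (S n)), false)); auto.
           apply HS; right; lsolve.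
           split. intros y [-> | ->]; lsolve.
           intros [[k|] c] Hz; pose proof (Hz _ (or_introl eq_refl));
             pose proof (Hz _ (or_intror eq_refl)); lsolve.
           apply HS. unfold S2. lsolve.
        -- apply HS; right; lsolve.
        -- apply HS; right; lsolve.
  - destruct n. left; auto. exfalso. revert H.
    apply (relgen _ (Fin n, true) (Fin (S (S n)), false)).
      * unfold S2; lsolve.
      * intros T cslT HS Ha [[m|] [|]].
        -- destruct (Nat.eq_dec m (S n)) as [->|Hne].
           apply (csl_join2 T (Fin (S n), false) (Fin n, true)); auto.
           apply HS; left; lsolve.
           split. intros y [-> | ->]; lsolve.
           intros [[k|] c] Hz; pose proof (Hz _ (or_introl eq_refl));
             pose proof (Hz _ (or_intror eq_refl)); lsolve.
           apply HS. unfold S2. lsolve.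
        -- destruct (Nat.eq_dec m (S n)) as [->|Hne]. exact Ha.
           apply HS. unfold S2. lsolve.
        -- apply HS; right; lsolve.
        -- apply HS; right; lsolve.
  - right; auto.
  - exfalso; apply relgen_omega0; auto.
Qed.

Theorem proposition2 :
  relative_generator L Lle (Omega, false) /\
  (forall T : L -> Prop, maximal_proper_complete_sublattice L Lle T -> T (Omega, false)) /\
  complete_sublattice L Lle (non_generator L Lle).
Proof.
  split; [exact relgen_omega0|split].
  - intros T [cslT [nfull Hmax]].
    destruct (classic (T (Omega, false))) as [|nT]; auto. exfalso.
    destruct (classic (exists M, forall n, T (Fin n, false) -> n <= M)) as [[M HM]|Hunb].
    + destruct (Hmax (S2 (Fin (S M), true) (Fin 0, true)) (S2_csl _ _)) as [Heq|Hf].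
      * intros [[n|] [|]] Tx; unfold S2.
        -- right; lsolve.
        -- left. pose proof (HM n Tx). lsolve.
        -- right; lsolve.
        -- contradiction.
      * assert (HT : T (Fin (S M), false)) by (apply Heq; unfold S2; left; lsolve).
        pose proof (HM _ HT). lia.
      * pose proof (Hf (Omega, false)) as H. unfold S2 in H. lsolve.
    + apply nT.
      apply (proj1 (cslT (fun y => exists n, y = (Fin n, false) /\ T y)
                      (fun y h => match h with ex_intro _ _ (conj _ t) => t end))).
      split.
      * intros y [n [-> _]]; lsolve.
      * intros [[m|] c] Hz.
        -- exfalso. apply Hunb. exists m. intros n Tn.
           destruct (Hz _ (ex_intro _ n (conj eq_refl Tn))) as [H _]. exact H.
        -- lsolve.
  - intros A HA; split; intros x [Hub Hl].
    + destruct (classic (exists y, A y /\ y = (Omega, true))) as [[y [Ay ->]]|Hn].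
      * pose proof (Hub _ Ay). destruct x as [[m|] [|]]; lsolve. apply nongen_top.
      * assert (Hle : Lle x (Fin 0, false)).
        { apply Hl. intros y Ay. destruct (nongen_cases y (HA y Ay)) as [->| ->].
          lsolve. exfalso; apply Hn; eauto. }
        destruct x as [[m|] [|]]; lsolve.
        replace m with 0 by lia. apply nongen_bot.
    + destruct (classic (exists y, A y /\ y = (Fin 0, false))) as [[y [Ay ->]]|Hn].
      * pose proof (Hub _ Ay). destruct x as [[m|] [|]]; lsolve.
        replace m with 0 by lia. apply nongen_bot.
      * assert (Hle : Lle (Omega, true) x).
        { apply Hl. intros y Ay. destruct (nongen_cases y (HA y Ay)) as [->| ->].
          exfalso; apply Hn; eauto. lsolve. }
        destruct x as [[m|] [|]]; lsolve. apply nongen_top.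
Qed.
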